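(* Let $d\ge3$, $F \leq F' \leq \mathrm{Sym}(\Omega)$ with $F$ semi-regular and $F'$ preserving each $F$-orbit, and let $n = [F':F]$. Fix a vertex $v_0$ of $T_d$. Then the stabilizer $K(F,F')$ of $v_0$ in $G(F,F')$ embeds as a cocompact lattice in the group $H_{n,d} = \mathfrak{S}_n^{V_d,\mathfrak{S}_{n-1}} \rtimes K_d$, where $K_d$ is the stabilizer of $v_0$ in $\mathrm{Aut}(T_d)$.
   Context: $\Omega$ is a set with $|\Omega|=d$; $T_d$ is the $d$-regular tree with vertex set $V_d$ and a coloring $c$ of its edges by $\Omega$ bijective on the edges at each vertex; local permutations $\sigma(g,v) = c|_{E(gv)}\circ g\circ (c|_{E(v)})^{-1}$. $G(F,F')$ is the (discrete, since $F$ is semi-regular) group of automorphisms of $T_d$ whose local permutations all lie in $F'$ and all but finitely many lie in $F$. A permutation group is semi-regular if point stabilizers are trivial. $\Sigma_n=\{0,\ldots,n-1\}$, $\mathfrak S_n=\mathrm{Sym}(\Sigma_n)$, $\mathfrak S_{n-1}$ the stabilizer of $0$; $\mathfrak{S}_n^{V_d,\mathfrak{S}_{n-1}}$ is the group of $(\sigma_v)_{v\in V_d}$ with $\sigma_v\in\mathfrak S_{n-1}$ for all but finitely many $v$, topologized so that the product group $\mathfrak{S}_{n-1}^{V_d}$ is a compact open subgroup; $H_{n,d}$ is the open subgroup of $G_{n,d}=\mathfrak{S}_n^{V_d,\mathfrak{S}_{n-1}}\rtimes\mathrm{Aut}(T_d)$ consisting of elements whose $\mathrm{Aut}(T_d)$-component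 fixes $v_0$. *)

(* Defs.v *)
From HB Require Import structures.
From mathcomp Require Import all_boot all_order all_fingroup.
From Stdlib Require Lists.List.
Set Implicit Arguments. Unset Strict Implicit. Unset Printing Implicit Defensive.

(* Omega = 'I_d.  Vertices of T_d are reduced words over Omega (no two equal
   consecutive letters), i.e. elements of the free product of d copies of
   Z/2; the most recent letter is the head.  The neighbour of w across the
   edge coloured a is  nbr a w  (w.a). *)

Definition reducedb d (w : seq 'I_d) : bool :=
  match w with [::] => true | a :: s => path (fun x y => x != y) a s end.

Definition nbr_seq d (a : 'I_d) (w : seq 'I_d) : seq 'I_d :=
  match w with [::] => [:: a] | b :: s => if b == a then s else a :: w end.

Lemma reduced_nbr d (a : 'I_d) (w : seq 'I_d) :
  reducedb w -> reducedb (nbr_seq a w).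
Proof.
case: w => [|b s] //=.
case: eqP => [_ | neq].
  by case: s => [|c s] //= /andP[].
move=> H; rewrite /= H andbT; apply/eqP=> E; exact: neq (esym E).
Qed.

Definition vtx d := {w : seq 'I_d | reducedb w}.

Definition nbr d (a : 'I_d) (v : vtx d) : vtx d :=
  exist _ (nbr_seq a (val v)) (reduced_nbr a (valP v)).

Definition root d : vtx d := exist _ [::] isT.

Definition adj d (u v : vtx d) : Prop := exists a, v = nbr a u.

Definition is_aut d (g : vtx d -> vtx d) : Prop :=
  bijective g /\ forall u v, adj (g u) (g v) <-> adj u v.

(* sigma(g,v) \in A : the local permutation a |-> colour of the edge
   g(edge of colour a at v) lies in A *)
Definition local_in d (A : {set {perm 'I_d}}) (g : vtx d -> vtx d) (v : vtx d)
  : Prop :=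
  exists2 s, s \in A & forall a, g (nbr a v) = nbr (s a) (g v).

Definition in_G d (F F' : {set {perm 'I_d}}) (g : vtx d -> vtx d) : Prop :=
  [/\ is_aut g, (forall v, local_in F' g v) &
      exists l : seq (vtx d), forall v, ~ local_in F g v -> v \in l].

Definition in_K d (F F' : {set {perm 'I_d}}) (g : vtx d -> vtx d) : Prop :=
  in_G F F' g /\ g (root d) = root d.

(* An element is a pair (sigma, k) with sigma : V_d -> S_n, sigma_v fixing 0
   for all but finitely many v, and k an automorphism fixing v_0. *)
Definition Hel n d := ((vtx d -> {perm 'I_n}) * (vtx d -> vtx d))%type.

(* membership in S_{n-1} = stabiliser of 0 *)
Definition fix0 n (s : {perm 'I_n}) : Prop :=
  forall i : 'I_n, nat_of_ord i = 0 -> s i = i.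

Definition in_H n d (x : Hel n d) : Prop :=
  [/\ is_aut x.2, x.2 (root d) = root d &
      exists l : seq (vtx d), forall v, ~ fix0 (x.1 v) -> v \in l].

Definition Heq n d (x y : Hel n d) : Prop := x.1 =1 y.1 /\ x.2 =1 y.2.

Definition is_one n d (x : Hel n d) : Prop :=
  (forall v, x.1 v = 1%g) /\ (forall v, x.2 v = v).

(* z = x * y in the semidirect product, where Aut(T_d) acts on S_n^{V_d} by
   (k.tau)_w = tau_{k^-1 w}:  (sigma,k)(tau,l) = (sigma (k.tau), k l),
   written without inverses as  z_{k v} = sigma_{k v} * tau_v . *)
Definition Hprod n d (x y z : Hel n d) : Prop :=
  (forall v, z.2 v = x.2 (y.2 v)) /\
  (forall v, z.1 (x.2 v) = (x.1 (x.2 v) * y.1 v)%g).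

(* basic identity neighbourhoods: (S_{n-1}^{V_d} with sigma_v = 1 on S)
   x (pointwise stabiliser of S in K_d), S finite *)
Definition U_S n d (S : seq (vtx d)) (x : Hel n d) : Prop :=
  [/\ in_H x, (forall v, fix0 (x.1 v)) &
      forall v, v \in S -> x.1 v = 1%g /\ x.2 v = v].

(* open subsets of H_{n,d} (product topology on S_n^{V,S_{n-1}} x K_d) *)
Definition H_open n d (O : Hel n d -> Prop) : Prop :=
  (forall x, O x -> in_H x) /\
  forall x, O x -> exists S, forall u z, U_S S u -> Hprod x u z -> O z.

Definition H_compact n d (C : Hel n d -> Prop) : Prop :=
  (forall x, C x -> in_H x) /\
  forall (I : Type) (O : I -> Hel n d -> Prop),
    (forall i, H_open (O i)) -> (forall x, C x -> exists i, O i x) ->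
    exists l : seq I, forall x, C x -> exists i, Stdlib.Lists.List.In i l /\ O i x.

(* a subgroup Gam is discrete: the identity is isolated *)
Definition H_discrete n d (Gam : Hel n d -> Prop) : Prop :=
  exists S : seq (vtx d), forall x, Gam x -> U_S S x -> is_one x.

Definition H_cocompact n d (Gam : Hel n d -> Prop) : Prop :=
  exists C, H_compact C /\
    forall x, in_H x -> exists g c, [/\ Gam g, C c & Hprod g c x].

(* Main.v *)
Require Import Defs.
From HB Require Import structures.
From mathcomp Require Import all_boot all_order all_fingroup.
From Stdlib Require Import ClassicalEpsilon Classical.
From Stdlib Require List.
From mathcomp Require Import zify.
Set Implicit Arguments. Unset Strict Implicit. Unset Printing Implicit Defensive.

Section Tree.
Variable d : nat.
Implicit Types (a b : 'I_d) (u v w : vtx d).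

Lemma nbr_seq_cases a (s : seq 'I_d) : nbr_seq a s = a :: s \/ s = a :: nbr_seq a s.
Proof. case: s => [|b s] /=; first by left. case: eqP => [->|_]; by [right|left]. Qed.

Lemma nbr_seq_inv a (s : seq 'I_d) : reducedb s -> nbr_seq a (nbr_seq a s) = s.
Proof.
case: s => [|b s] /=; first by rewrite eqxx.
case: eqP => [->|neq] /=.
  case: s => [|c s] //= /andP[ne _]. by rewrite eq_sym (negbTE ne).
by rewrite eqxx.
Qed.

Lemma nbr_inv a v : nbr a (nbr a v) = v.
Proof. apply: val_inj => /=. exact: nbr_seq_inv (valP v). Qed.

Lemma nbr_seq_col a b (s : seq 'I_d) : nbr_seq a s = nbr_seq b s -> a = b.
Proof.
case: s => [|c s] /=; first by case.
case: eqP => [<-|na]; case: eqP => [<-|nb] //.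
- move=> E. have := congr1 size E. rewrite /=. lia.
- move=> E. have := congr1 size E. rewrite /=. lia.
- by case.
Qed.

Lemma nbr_col a b v : nbr a v = nbr b v -> a = b.
Proof. move/(congr1 val) => /=. exact: nbr_seq_col. Qed.

Lemma nbr_seq_col2 a b (s : seq 'I_d) : nbr_seq a (nbr_seq b s) = s -> a = b.
Proof.
have [E|E] := nbr_seq_cases b s.
- rewrite E. have [E'|E'] := nbr_seq_cases a (b :: s).
    rewrite E' => F; have := congr1 size F; rewrite /=; lia.
  by case: E'.
- move: (nbr_seq b s) E => t E F.
  have [E'|E'] := nbr_seq_cases a t.
    rewrite E' in F. rewrite -F in E. by case: E.
  have := congr1 size E'. rewrite F E /=. lia.
Qed.

Lemma adj_sym u v : adj u v -> adj v u.
Proof. by case=> a ->; exists a; rewrite nbr_inv. Qed.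

Lemma adj_nbr a v : adj v (nbr a v).
Proof. by exists a. Qed.

Lemma vtx_eq u v : val u = val v -> u = v.
Proof. exact: val_inj. Qed.

Lemma root_eq v : val v = [::] -> v = Defs.root d.
Proof. by move=> h; apply: val_inj. Qed.

End Tree.

Section Aut.
Variable d : nat.
Implicit Types (a b : 'I_d) (u v w : vtx d) (f g : vtx d -> vtx d).

Definition vinv f (w : vtx d) : vtx d :=
  epsilon (inhabits (Defs.root d)) (fun v => f v = w).

Lemma vinv_spec f w : (exists v, f v = w) -> f (vinv f w) = w.
Proof. move=> h; exact: (epsilon_spec (inhabits (Defs.root d)) (fun v => f v = w) h). Qed.

Lemma surj_bij f : injective f -> (forall w, exists v, f v = w) -> bijective f.
Proof.
move=> inj sur; exists (vinv f) => [v|w]; last exact: vinv_spec.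
apply: inj; apply: vinv_spec; by exists v.
Qed.

Lemma aut_inj f : is_aut f -> injective f.
Proof. by case=> /bij_inj. Qed.

Lemma aut_surj f w : is_aut f -> f (vinv f w) = w.
Proof. case=> [[g _ gK] _]; apply: vinv_spec; by exists (g w). Qed.

Lemma aut_vinvK f v : is_aut f -> vinv f (f v) = v.
Proof. move=> A; apply: (aut_inj A); exact: aut_surj. Qed.

Lemma aut_adj f u v : is_aut f -> adj u v -> adj (f u) (f v).
Proof. by case=> _ h /h. Qed.

Lemma aut_vinv f : is_aut f -> is_aut (vinv f).
Proof.
move=> A; split.
  exists f => [w|v]; [exact: (aut_surj w A)|exact: (aut_vinvK v A)].
move=> u v; case: (A) => _ h. by rewrite -h !aut_surj.
Qed.

Lemma aut_comp f g : is_aut f -> is_aut g -> is_aut (fun v => f (g v)).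
Proof.
move=> [bf hf] [bg hg]; split; first exact: bij_comp.
by move=> u v; rewrite hf hg.
Qed.

Lemma aut_size f v : is_aut f -> f (Defs.root d) = Defs.root d ->
  size (val (f v)) = size (val v).
Proof.
move=> A R.
suff: forall n v, size (val v) <= n -> size (val (f v)) = size (val v) by apply.
elim=> [|n IH] {}v.
  by rewrite leqn0 => /eqP/size0nil/root_eq ->; rewrite R.
rewrite leq_eqVlt => /orP[/eqP sv|]; last exact: IH.
case E: (val v) sv => [//|a s] /= [sn].
set u := nbr a v.
have vu : v = nbr a u by rewrite /u nbr_inv.
have us : val u = s by rewrite /u /= E /= eqxx.
have IHu : size (val (f u)) = n by rewrite IH us // sn.
have [b fb] : adj (f u) (f v) by apply: aut_adj => //; rewrite vu; exact: adj_nbr.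
have Hv : val (f v) = nbr_seq b (val (f u)) by rewrite fb.
have [C|C] := nbr_seq_cases b (val (f u)).
  by rewrite Hv C /= IHu sn.
exfalso.
case Es: s sn us => [|c t] sn us.
  by move: IHu; rewrite C -sn.
set p := nbr c u.
have ps : val p = t by change (nbr_seq c (val u) = t); rewrite us /= eqxx.
have IHp : size (val (f p)) = n.-1 by rewrite IH; rewrite ps -sn /=; lia.
have [b' fb'] : adj (f u) (f p) by exact: aut_adj (adj_nbr _ _).
have [C'|C'] := nbr_seq_cases b' (val (f u)).
  move: IHp; rewrite fb' /= C' /= IHu; lia.
have ebb : b = b' by move: C'; rewrite C => -[].
have fpv : f p = f v by rewrite fb fb' ebb.
have := congr1 size (congr1 val (aut_inj A fpv)).
rewrite ps E Es /=. lia.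
Qed.

End Aut.

Section Lperm.
Variable d : nat.
Implicit Types (a b : 'I_d) (u v w : vtx d) (f g h : vtx d -> vtx d).

Definition lperm g v : {perm 'I_d} :=
  odflt 1%g [pick s : {perm 'I_d} | [forall a, g (nbr a v) == nbr (s a) (g v)]].

Lemma lperm_spec g v (s : {perm 'I_d}) :
  (forall a, g (nbr a v) = nbr (s a) (g v)) -> lperm g v = s.
Proof.
move=> H; rewrite /lperm; case: pickP => [s' /forallP H'|H'] /=.
  apply/permP => a; apply: (@nbr_col _ _ _ (g v)).
  by rewrite -(eqP (H' a)) H.
have := H' s; move/negbT/negP; case; apply/forallP => a; by rewrite H.
Qed.

Lemma local_lperm (A : {set {perm 'I_d}}) g v : local_in A g v ->
  lperm g v \in A /\ forall a, g (nbr a v) = nbr (lperm g v a) (g v).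
Proof. by case=> s sA H; rewrite (lperm_spec H). Qed.

Lemma lperm_comp (A B : {set {perm 'I_d}}) g h v :
  local_in A g (h v) -> local_in B h v ->
  lperm (fun x => g (h x)) v = (lperm h v * lperm g (h v))%g.
Proof.
move=> /local_lperm[_ Hg] /local_lperm[_ Hh]; apply: lperm_spec => a.
by rewrite Hh Hg permM.
Qed.

Variable c : seq 'I_d -> 'I_d -> {perm 'I_d} -> {perm 'I_d}.
Variable s0 : {perm 'I_d}.
Hypothesis cP : forall hw a s, c hw a s a = s a.

Fixpoint brec (w : seq 'I_d) : seq 'I_d * {perm 'I_d} :=
  if w is a :: v then
    let p := brec v in let hw := p.2 a :: p.1 in (hw, c hw a p.2)
  else ([::], s0).

Lemma brec_size (w : seq _) : size (brec w).1 = size w.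
Proof. by elim: w => //= a w ->. Qed.

Lemma brec_red (w : seq _) : reducedb w -> reducedb (brec w).1.
Proof.
elim: w => // a [|b w] IH //= /andP[ab pw].
have := IH pw; rewrite /= => ->; rewrite andbT.
set s := c _ b (brec w).2.
have e : s b = (brec w).2 b := cP _ _ _.
rewrite -e; apply: contra ab => /eqP/perm_inj ->; done.
Qed.

Definition bfun (v : vtx d) : vtx d :=
  exist _ (brec (val v)).1 (brec_red (valP v)).

Lemma bfun_root : bfun (Defs.root d) = Defs.root d.
Proof. exact: val_inj. Qed.

Lemma bfun_loc a v : bfun (nbr a v) = nbr ((brec (val v)).2 a) (bfun v).
Proof.
apply: val_inj; rewrite /=.
case: v => [[|b w] rw] //=.
case: eqP => [->|ne] //=.
by rewrite cP eqxx.
set s := c _ b (brec w).2.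
have e : s b = (brec w).2 b := cP _ _ _.
rewrite -e; case: eqP => // /perm_inj E; by case: ne.
Qed.

Lemma bfun_inj : injective bfun.
Proof.
move=> [u ru] [v rv] /(congr1 val) /= E; apply: val_inj => /=.
elim: u v E {ru rv} => [|a u IH] [|b v] //= [E1 E2].
have uv := IH _ E2; subst v; congr (_ :: _); exact: perm_inj E1.
Qed.

Lemma bfun_surj w : exists v, bfun v = w.
Proof.
case: w => w rw.
suff [x [rx E]] : exists x : seq 'I_d, reducedb x /\ (brec x).1 = w.
  by exists (exist _ x rx); apply: val_inj.
elim: w rw => [|b w IH] rw; first by exists [::].
have [x [rx E]] := IH (path_sorted rw).
exists (((brec x).2)^-1%g b :: x); split; last by rewrite /= permKV E.
case: x rx E => [|a x] //= rx E; rewrite rx andbT.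
apply/negP => /eqP Eab.
move: rw; rewrite -E /=.
move: Eab; set s := c _ _ _ => Eab.
have e : s a = (brec x).2 a := cP _ _ _.
have -> : (brec x).2 a = b by rewrite -e -Eab permKV.
by rewrite eqxx.
Qed.

Lemma bfun_aut : is_aut bfun.
Proof.
split; first by apply: surj_bij; [exact: bfun_inj|exact: bfun_surj].
move=> u v; split.
  case=> b E.
  exists (((brec (val u)).2)^-1%g b); apply: bfun_inj.
  by rewrite E bfun_loc permKV.
by case=> a ->; rewrite bfun_loc; exact: adj_nbr.
Qed.

Lemma bfun_lperm v : lperm bfun v = (brec (val v)).2.
Proof. apply: lperm_spec => a; exact: bfun_loc. Qed.

End Lperm.

Section Rho.
Variables (d : nat) (F F' : {group {perm 'I_d}}).
Local Open Scope group_scope.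

Lemma FinR : (F : {set _}) \in rcosets F F'.
Proof. apply/rcosetsP; exists 1; [exact: group1 | by rewrite rcoset1]. Qed.

Lemma nR_gt0 : 0 < #|rcosets F F'|.
Proof. apply/card_gt0P; exists (F : {set _}); exact: FinR. Qed.

Definition i0 : 'I_#|rcosets F F'| := Ordinal nR_gt0.
Definition j0 : 'I_#|rcosets F F'| := enum_rank_in FinR (F : {set _}).
Definition eC (i : 'I_#|rcosets F F'|) : {set {perm 'I_d}} :=
  enum_val (A := rcosets F F') (tperm i0 j0 i).
Definition eI (X : {set {perm 'I_d}}) : 'I_#|rcosets F F'| :=
  tperm i0 j0 (enum_rank_in FinR X).

Lemma eCK i : eI (eC i) = i.
Proof. by rewrite /eI /eC enum_valK_in tpermK. Qed.

Lemma eC_in i : eC i \in rcosets F F'.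
Proof. exact: enum_valP. Qed.

Lemma eIK X : X \in rcosets F F' -> eC (eI X) = X.
Proof. by move=> XR; rewrite /eI /eC tpermK enum_rankK_in. Qed.

Lemma eC_i0 : eC i0 = F.
Proof. by rewrite /eC tpermL /j0 enum_rankK_in //; exact: FinR. Qed.

Lemma eI_inj X Y : X \in rcosets F F' -> Y \in rcosets F F' -> eI X = eI Y -> X = Y.
Proof. by move=> XR YR E; rewrite -(eIK XR) -(eIK YR) E. Qed.

Lemma rcosets_mul X s : X \in rcosets F F' -> s \in F' -> X :* s \in rcosets F F'.
Proof.
move=> /rcosetsP[t tF ->] sF; apply/rcosetsP; exists (t * s); first exact: groupM.
by rewrite rcosetM.
Qed.

Definition rfun (s : {perm 'I_d}) (i : 'I_#|rcosets F F'|) : 'I_#|rcosets F F'| :=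
  if s \in F' then eI (eC i :* s) else i.

Lemma rfun_inj s : injective (rfun s).
Proof.
move=> i j; rewrite /rfun; case: ifP => // sF E.
have E1 := eI_inj (rcosets_mul (eC_in i) sF) (rcosets_mul (eC_in j) sF) E.
have E2 : eC i = eC j.
  by rewrite -[eC i]rcoset1 -[eC j]rcoset1 -(mulgV s) !rcosetM E1.
by rewrite -(eCK i) -(eCK j) E2.
Qed.

Definition rho s : {perm 'I_#|rcosets F F'|} := perm (@rfun_inj s).

Lemma rhoE s i : s \in F' -> rho s i = eI (eC i :* s).
Proof. by move=> sF; rewrite /rho permE /rfun sF. Qed.

Lemma rhoM s t : s \in F' -> t \in F' -> rho (s * t) = rho s * rho t.
Proof.
move=> sF tF; apply/permP => i.
rewrite permM !rhoE ?groupM // eIK ?rcosets_mul ?eC_in //.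
by rewrite rcosetM.
Qed.

Lemma rho1 : rho 1 = 1.
Proof. apply/permP => i; rewrite rhoE // perm1 rcoset1 eCK //. Qed.

Lemma rho_i0 s : s \in F' -> (rho s i0 == i0) = (s \in F).
Proof.
move=> sF; rewrite rhoE // eC_i0.
apply/eqP/idP => [E|sF0].
  have : F :* s = F.
    apply: eI_inj; [exact: rcosets_mul FinR sF | exact: FinR |].
    by rewrite E -[X in _ = eI X]eC_i0 eCK.
  by move=> E2; rewrite -E2 rcoset_refl.
by rewrite (rcoset_id sF0) -[X in eI X]eC_i0 eCK.
Qed.

Hypothesis sFF : F \subset F'.
Hypothesis orb : forall s, s \in F' -> forall w : 'I_d, s w \in orbit 'P F w.

Lemma rho_exists i (a b : 'I_d) : b \in orbit 'P F a ->
  exists s, [/\ s \in F', s a = b & rho s i0 = i].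
Proof.
move=> bo.
have /rcosetsP[t tF Et] := eC_in i.
have tiF : t^-1 \in F' by rewrite groupV.
have : t^-1 b \in orbit 'P F a.
  apply: (orbit_trans _ bo); exact: orb.
move/orbitP => [u uF /= ua].
exists (u * t); split.
- by rewrite groupM // (subsetP sFF).
- have ua2 : u a = t^-1 b := ua. by rewrite permM ua2 permKV.
- rewrite rhoE; last by rewrite groupM // (subsetP sFF).
  by rewrite eC_i0 rcosetM rcoset_id // -Et eCK.
Qed.

End Rho.

Section Words.
Variable d : nat.

Fixpoint allw (k : nat) : seq (seq 'I_d) :=
  if k is k'.+1 then [::] :: [seq a :: w | a <- enum 'I_d, w <- allw k']
  else [:: [::]].

Lemma mem_allw k w : (w \in allw k) = (size w <= k).
Proof.
elim: k w => [|k IH] [|a w] //=.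
rewrite in_cons /=; apply/allpairsP/idP => [[[b x] [_ /= xk [_ ->]]]|wk].
  by rewrite ltnS -IH.
by exists (a, w); rewrite mem_enum IH.
Qed.

Definition ball N : seq (vtx d) := pmap insub (allw N).

Lemma mem_ball N v : (v \in ball N) = (size (val v) <= N).
Proof. by rewrite /ball mem_pmap_sub mem_allw. Qed.

End Words.

Fixpoint tup (T : Type) (E : seq T) (k : nat) : seq (seq T) :=
  if k is k'.+1 then [seq x :: t | x <- E, t <- tup E k'] else [:: [::]].

Lemma mem_tup (T : eqType) (E : seq T) k s :
  size s = k -> all (mem E) s -> s \in tup E k.
Proof.
elim: k s => [|k IH] [|x s] //= [sk] /andP[xE sE].
apply/allpairsP; exists (x, s); split => //; exact: IH.
Qed.

Lemma fin_witness (X : Type) (T : eqType) (E : seq T) (D : X -> T) (P : X -> Prop) :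
  (forall x, P x -> D x \in E) ->
  exists L : seq X, (forall x, List.In x L -> P x) /\
    forall y, P y -> exists x, List.In x L /\ D x = D y.
Proof.
elim: E P => [|e E IH] P HP.
  exists nil; split => // y /HP; by rewrite in_nil.
have HP' : forall x, P x /\ D x != e -> D x \in E.
  by move=> x [px ne]; move: (HP x px); rewrite in_cons (negbTE ne).
have [L [L1 L2]] := IH (fun x => P x /\ D x != e) HP'.
case: (classic (exists x, P x /\ D x = e)) => [[x0 [p0 e0]]|nx].
  exists (x0 :: L); split.
    by move=> x [<-|/L1 []].
  move=> y py; case: (eqVneq (D y) e) => [ye|ye].
    by exists x0; split; [left| rewrite ye].
  by have [x [xL xy]] := L2 y (conj py ye); exists x; split; [right|].
exists L; split; first by move=> x /L1 [].
move=> y py; case: (eqVneq (D y) e) => [ye|ye].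
  by case: nx; exists y.
exact: L2 y (conj py ye).
Qed.

Section Compact.
Variables n d : nat.
Local Notation Hel := (Hel n d).

Definition C0 (x : Hel) := in_H x /\ forall v, fix0 (x.1 v).
Definition agree N (x y : Hel) :=
  forall v : vtx d, size (val v) <= N -> x.2 v = y.2 v /\ x.1 v = y.1 v.

Lemma agree_sym N x y : agree N x y -> agree N y x.
Proof. by move=> h v /h [-> ->]. Qed.
Lemma agree_trans N x y z : agree N x y -> agree N y z -> agree N x z.
Proof. by move=> h1 h2 v vN; have [-> ->] := h1 v vN; exact: h2. Qed.
Lemma agree_mono M N x y : M <= N -> agree N x y -> agree M x y.
Proof. by move=> MN h v vM; apply: h; exact: leq_trans MN. Qed.

Lemma C0_aut x : C0 x -> is_aut x.2 /\ x.2 (Defs.root d) = Defs.root d.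
Proof. by case=> [[]]. Qed.

Lemma FIN N : exists L : seq Hel, (forall x, List.In x L -> C0 x) /\
  forall y, C0 y -> exists x, List.In x L /\ agree N x y.
Proof.
pose D (y : Hel) := [seq (val (y.2 v), y.1 v) | v <- ball d N].
pose E := tup [seq (w, p) | w <- allw d N, p <- enum {perm 'I_n}] (size (ball d N)).
have HD : forall y, C0 y -> D y \in E.
  move=> y /C0_aut [ya yr]; apply: mem_tup; first by rewrite size_map.
  apply/allP => z /mapP [v vb ->]; apply/allpairsP; exists (val (y.2 v), y.1 v).
  by rewrite mem_enum mem_allw aut_size // -mem_ball.
have [L [L1 L2]] := fin_witness HD.
exists L; split => // y Cy; have [x [xL Dxy]] := L2 y Cy.
exists x; split => // v vN.
have vb : v \in ball d N by rewrite mem_ball.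
have := (proj2 (eq_in_map _ _ _) Dxy) v vb => -[/val_inj -> ->]; done.
Qed.

Lemma fix0_mul (p q : {perm 'I_n}) : fix0 p -> fix0 q -> fix0 (p^-1 * q)%g.
Proof.
move=> hp hq i i0.
have e : p^-1%g i = i by rewrite -{1}(hp i i0) permK.
by rewrite permM e hq.
Qed.

Variables (I : Type) (O : I -> Hel -> Prop).
Hypothesis Oopen : forall i, H_open (O i).
Hypothesis Ocov : forall x, C0 x -> exists i, O i x.

Definition fc (P : Hel -> Prop) :=
  exists l : seq I, forall x, P x -> exists i, List.In i l /\ O i x.
Definition cls N (x y : Hel) := C0 y /\ agree N x y.
Definition bad N x := C0 x /\ ~ fc (cls N x).

Lemma fc_union (P Q : Hel -> Prop) M (L : seq Hel) :
  (forall y, P y -> exists x, List.In x L /\ Q x /\ cls M x y) ->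
  (forall x, List.In x L -> Q x -> fc (cls M x)) -> fc P.
Proof.
move=> H1 H2.
have [l Hl] : exists l : seq I, forall x, List.In x L -> Q x ->
    forall y, cls M x y -> exists i, List.In i l /\ O i y.
  elim: L H2 {H1} => [|x L IH] H2; first by exists nil.
  have [l' Hl'] := IH (fun x' h => H2 x' (or_intror h)).
  case: (classic (Q x)) => [qx|nqx].
    have [lx Hlx] := H2 x (or_introl erefl) qx.
    exists (lx ++ l') => x' [<-|x'L] qx' y cy.
      have [i [il oi]] := Hlx y cy; exists i; split => //.
      by apply: List.in_or_app; left.
    have [i [il oi]] := Hl' x' x'L qx' y cy; exists i; split => //.
    by apply: List.in_or_app; right.
  exists l' => x' [<-|x'L] qx' y cy; first by case: nqx.
  exact: Hl' x' x'L qx' y cy.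
exists l => y Py; have [x [xL [qx cxy]]] := H1 y Py; exact: Hl x xL qx y cxy.
Qed.


Lemma bad0 : ~ fc C0 -> exists x, bad 0 x.
Proof.
move=> nfc; apply: NNPP => nb; apply: nfc.
have [L [L1 L2]] := FIN 0.
apply: (@fc_union _ C0 0 L).
  move=> y Cy; have [x [xL ag]] := L2 y Cy; exists x; split => //.
  by split; [exact: L1|split].
move=> x xL Cx; apply: NNPP => nf; apply: nb; by exists x.
Qed.

Lemma bad_step N x : bad N x -> exists y, agree N x y /\ bad N.+1 y.
Proof.
move=> [Cx nf]; apply: NNPP => nb; apply: nf.
have [L [L1 L2]] := FIN N.+1.
apply: (@fc_union _ (fun x' => agree N x x' /\ C0 x') N.+1 L).
- move=> y [Cy axy]; have [x' [x'L ag]] := L2 y Cy.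
  exists x'; split => //; split; last by split.
  split; last exact: L1.
  exact: agree_trans axy (agree_sym (agree_mono (leqnSn N) ag)).
- move=> x' x'L [ax Cx']; apply: NNPP => nf'; apply: nb; exists x'; split => //.
Qed.

Definition hel0 : Hel := (fun _ => 1%g, id).
Definition nxt N x := epsilon (inhabits hel0) (fun y => agree N x y /\ bad N.+1 y).
Fixpoint xs (x0 : Hel) N := if N is N'.+1 then nxt N' (xs x0 N') else x0.

Lemma agree_refl N x : agree N x x.
Proof. by []. Qed.

Section Seq.
Variable x0 : Hel.
Hypothesis b0 : bad 0 x0.

Lemma xs_bad N : bad N (xs x0 N).
Proof.
elim: N => [|N IH] //.
by have [_ b] := epsilon_spec (inhabits hel0) _ (bad_step IH).
Qed.

Lemma xs_agree N : agree N (xs x0 N) (xs x0 N.+1).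
Proof. by have [a _] := epsilon_spec (inhabits hel0) _ (bad_step (xs_bad N)); exact: a. Qed.

Lemma xs_chain M K : M <= K -> agree M (xs x0 M) (xs x0 K).
Proof.
elim: K => [|K IH]; first by rewrite leqn0 => /eqP ->.
rewrite leq_eqVlt => /orP[/eqP ->|]; first exact: agree_refl.
rewrite ltnS => MK; exact: (agree_trans (IH MK) (agree_mono MK (xs_agree (N:=K)))).
Qed.

Definition ylim : Hel :=
  (fun v => (xs x0 (size (val v))).1 v, fun v => (xs x0 (size (val v))).2 v).

Lemma ylim_agree N : agree N (xs x0 N) ylim.
Proof.
move=> v vN; have [e1 e2] := xs_chain vN (leqnn _).
by rewrite /ylim /= e1 e2.
Qed.

Lemma xs_C0 N : C0 (xs x0 N).
Proof. by case: (xs_bad N). Qed.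

Lemma ylim2 N v : size (val v) <= N -> ylim.2 v = (xs x0 N).2 v.
Proof. by move=> vN; have [-> _] := ylim_agree vN. Qed.

Lemma ylim_C0 : C0 ylim.
Proof.
have fx : forall v, fix0 (ylim.1 v) by move=> v; exact: (@xs_C0 _).2.
split => //; split; last by exists [::] => v /(_ (fx v)).
- split.
    apply: surj_bij.
      move=> u v; set M := maxn (size (val u)) (size (val v)).
      rewrite (@ylim2 M) ?leq_maxl // (@ylim2 M v) ?leq_maxr //.
      move=> E; have := C0_aut (@xs_C0 M); case=> A _; exact: (aut_inj A E).
    move=> w; set M := size (val w); have [A R] := C0_aut (@xs_C0 M).
    exists (vinv (xs x0 M).2 w).
    have sv : size (val (vinv (xs x0 M).2 w)) = M.
      by rewrite -(aut_size _ A R) aut_surj.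
    by rewrite (@ylim2 M) ?sv // aut_surj.
  move=> u v; set M := maxn (size (val u)) (size (val v)).
  rewrite (@ylim2 M) ?leq_maxl // (@ylim2 M v) ?leq_maxr //.
  exact: (C0_aut (@xs_C0 M)).1.2.
- by rewrite (@ylim2 0) //; exact: (C0_aut (@xs_C0 0)).2.
Qed.

End Seq.

Lemma open_step y z S N : C0 y -> C0 z -> agree N y z ->
  (forall v, v \in S -> size (val v) <= N) ->
  exists u, U_S S u /\ Hprod y u z.
Proof.
move=> Cy Cz ayz SN.
have [Ay Ry] := C0_aut Cy; have [Az Rz] := C0_aut Cz.
pose u : Hel := (fun v => ((y.1 (y.2 v))^-1 * z.1 (y.2 v))%g, fun v => vinv y.2 (z.2 v)).
have fu : forall v, fix0 (u.1 v) by move=> v; apply: fix0_mul; [exact: Cy.2|exact: Cz.2].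
exists u; split; last first.
  split => v /=; first by rewrite aut_surj.
  by rewrite mulKVg.
split => //.
- split.
  + exact: aut_comp (aut_vinv Ay) Az.
  + by rewrite /= Rz -{1}Ry aut_vinvK.
  + by exists [::] => v /(_ (fu v)).
- move=> v vS; have vN := SN v vS.
  have yvN : size (val (y.2 v)) <= N by rewrite aut_size.
  have [e2 _] := ayz v vN; have [_ e1] := ayz _ yvN.
  by rewrite /= -e1 mulVg -e2 aut_vinvK.
Qed.

Lemma C0_fc : fc C0.
Proof.
apply: NNPP => nfc; have [x0 b0] := bad0 nfc.
have Cy := ylim_C0 b0.
have [i Oi] := Ocov Cy.
have [_ Hop] := Oopen i; have [S HS] := Hop _ Oi.
pose N := foldr maxn 0 [seq size (val v) | v <- S].
have SN : forall v, v \in S -> size (val v) <= N.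
  rewrite /N; move: (S) => S'; elim: S' => [|w S' IH] v //; rewrite in_cons /= => /orP[/eqP ->|vS].
    exact: leq_maxl.
  exact: leq_trans (IH v vS) (leq_maxr _ _).
have [_ nf] := xs_bad b0 N; apply: nf; exists [:: i] => z [Cz az].
exists i; split; first by left.
have ayz : agree N (ylim x0) z := agree_trans (agree_sym (ylim_agree b0 (N:=N))) az.
have [u [Uu Hu]] := open_step Cy Cz ayz SN.
exact: HS u z Uu Hu.
Qed.

End Compact.

Lemma C0_compact n d : H_compact (@C0 n d).
Proof.
split; first by move=> x [].
move=> I O Oo Oc; exact: (C0_fc Oo Oc).
Qed.

Section Main.
Variables (d : nat) (F F' : {group {perm 'I_d}}).
Hypothesis d2 : 2 < d.
Hypothesis sFF : F \subset F'.
Hypothesis sreg : forall w : 'I_d, ('C_F[w | 'P] = 1)%g.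
Hypothesis orb : forall s, s \in F' -> forall w : 'I_d, s w \in orbit 'P F w.

Local Notation n := #|F' : F|%g.
Local Notation rho := (rho F F').
Local Notation i0 := (i0 F F').

Definition phi (g : vtx d -> vtx d) : Hel n d :=
  (fun w => ((rho (lperm g (vinv g w)))^-1)%g, g).

Lemma fix0E (p : {perm 'I_n}) : fix0 p <-> p i0 = i0.
Proof.
split; first by move=> h; apply: h.
move=> h i i0'; suff -> : i = i0 by [].
exact: val_inj.
Qed.

Lemma fix0_rho s : s \in F' -> fix0 ((rho s)^-1)%g <-> s \in F.
Proof.
move=> sF; rewrite fix0E -(rho_i0 F sF); split => [h|/eqP h].
  by apply/eqP; rewrite -{1}h permKV.
by rewrite -{1}h permK.
Qed.

Lemma semireg (s : {perm 'I_d}) a : s \in F -> s a = a -> s = 1%g.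
Proof.
move=> sF sa; have : s \in 'C_F[a | 'P]%g by rewrite inE sF; apply/astab1P.
by rewrite sreg => /set1P.
Qed.

Lemma phi_H g : in_K F F' g -> in_H (phi g).
Proof.
case=> [[A loc [l Hl]] R]; split => //.
exists (map g l) => w nf.
have hw : ~ local_in F g (vinv g w).
  move=> lF; apply: nf; have [sF _] := local_lperm lF.
  have [sF' _] := local_lperm (loc (vinv g w)).
  by rewrite /phi /=; apply/fix0_rho.
by rewrite -(aut_surj w A); apply: map_f; exact: Hl.
Qed.

Lemma phi_hom g h : in_K F F' g -> in_K F F' h ->
  Hprod (phi g) (phi h) (phi (fun v => g (h v))).
Proof.
case=> [[Ag lg _] Rg] [[Ah lh _] Rh]; split => // v /=.
have Agh := aut_comp Ag Ah.
have -> : vinv (fun v => g (h v)) (g v) = vinv h v.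
  by rewrite -{1}(aut_surj v Ah) (aut_vinvK _ Agh).
rewrite (lperm_comp (lg _) (lh _)) aut_surj // aut_vinvK //.
have [s1 _] := local_lperm (lh (vinv h v)).
have [s2 _] := local_lperm (lg v).
by rewrite (rhoM F s1 s2) invMg.
Qed.

Definition a0 : 'I_d := Ordinal (ltn_trans (isT : 0 < 2) d2).

Lemma phi_discrete : H_discrete (fun x => exists2 g, in_K F F' g & Heq x (phi g)).
Proof.
exists [:: Defs.root d; nbr a0 (Defs.root d)] => x [g [[Ag lg _] Rg] [E1 E2]] [_ fx hS].
have sF : forall v, lperm g v \in F.
  move=> v; have := fx (g v); rewrite E1 /phi /= aut_vinvK //.
  have [sF' _] := local_lperm (lg v); by move/(fix0_rho sF').
have loc : forall v a, g (nbr a v) = nbr (lperm g v a) (g v).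
  by move=> v a; have [_ ->] := local_lperm (lg v).
have one : forall v a, g v = v -> g (nbr a v) = nbr a v -> lperm g v = 1%g.
  move=> v a gv gav; apply: (semireg (a := a)) => //.
  by apply: (@nbr_col _ _ _ v); rewrite -[in RHS]gav loc gv.
suff key : forall (w : seq 'I_d) v, val v = w -> g v = v /\ lperm g v = 1%g.
  split => v; first by rewrite E1 /phi /= (key _ _ erefl).2 (rho1 F F') invg1.
  by rewrite E2 /= (key _ _ erefl).1.
elim => [|a s IH] v vE.
  have -> : v = Defs.root d by exact: root_eq.
  split => //; apply: (one _ a0) => //.
  have := (hS (nbr a0 (Defs.root d))); rewrite !inE eqxx orbT => /(_ isT) [_].
  by rewrite E2.
set u := nbr a v.
have us : val u = s by change (nbr_seq a (val v) = s); rewrite vE /= eqxx.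
have [gu su] := IH u us.
have vu : v = nbr a u by rewrite /u nbr_inv.
have gv : g v = v by rewrite vu loc gu su perm1.
split => //; apply: (one _ a) => //.
Qed.

Section Cocompact.
Variable x : Hel n d.
Hypothesis xH : in_H x.

Definition target (hw : seq 'I_d) : 'I_n :=
  ((x.1 (insubd (Defs.root d) hw))^-1)%g i0.

Definition chooser (hw : seq 'I_d) (a : 'I_d) (s : {perm 'I_d}) : {perm 'I_d} :=
  odflt s [pick t in F' | (t a == s a) && (rho t i0 == target hw)].

Lemma chooserP hw a s : chooser hw a s a = s a.
Proof. by rewrite /chooser; case: pickP => [t /andP[_ /andP[/eqP ->]]|]. Qed.

Lemma chooserT hw a s : s \in F' ->
  chooser hw a s \in F' /\ rho (chooser hw a s) i0 = target hw.
Proof.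
move=> sF; rewrite /chooser; case: pickP => [t /and3P[tF _ /eqP ->]|none] //.
have [t [tF ta tr]] := rho_exists sFF orb (target hw) (orb sF a).
by have := none t; rewrite tF ta tr !eqxx.
Qed.

Definition s0 := chooser [::] a0 1%g.
Definition hh := bfun (c := chooser) s0 chooserP.

Lemma brecT (w : seq 'I_d) : (brec chooser s0 w).2 \in F' /\
  rho (brec chooser s0 w).2 i0 = target (brec chooser s0 w).1.
Proof.
case: w => [|a w] /=; first exact: chooserT (group1 _).
apply: chooserT.
elim: w {a} => [|b w IH] /=; first exact: (chooserT _ _ (group1 _)).1.
exact: (chooserT _ _ IH).1.
Qed.

Lemma hh_aut : is_aut hh.
Proof. exact: bfun_aut. Qed.

Lemma hh_root : hh (Defs.root d) = Defs.root d.
Proof. exact: bfun_root. Qed.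

Lemma hh_lperm v : lperm hh v = (brec chooser s0 (val v)).2.
Proof. exact: bfun_lperm. Qed.

Lemma hh_target v : rho (lperm hh v) i0 = ((x.1 (hh v))^-1)%g i0.
Proof.
rewrite hh_lperm (brecT _).2 /target.
by have -> : insubd (Defs.root d) (brec chooser s0 (val v)).1 = hh v
  by rewrite -[RHS](valKd (Defs.root d)).
Qed.

Lemma hh_K : in_K F F' hh.
Proof.
split; last exact: hh_root.
case: xH => _ _ [l Hl].
split; first exact: hh_aut.
  move=> v; exists (lperm hh v); first by rewrite hh_lperm (brecT _).1.
  move=> a; rewrite hh_lperm; exact: bfun_loc.
exists (map (vinv hh) l) => v nl.
rewrite -(aut_vinvK v hh_aut); apply: map_f; apply: Hl => fx.
apply: nl; exists (lperm hh v); last first.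
  move=> a; rewrite hh_lperm; exact: bfun_loc.
have sF' : lperm hh v \in F' by rewrite hh_lperm (brecT _).1.
rewrite -(rho_i0 F sF') hh_target; apply/eqP.
by rewrite -{1}(fx i0 erefl) permK.
Qed.

Lemma cocompact_witness : exists g c,
  [/\ (exists2 g', in_K F F' g' & Heq g (phi g')), C0 c & Hprod g c x].
Proof.
have A := hh_aut.
pose c : Hel n d := (fun v => (((phi hh).1 (hh v))^-1 * x.1 (hh v))%g,
                     fun v => vinv hh (x.2 v)).
case: xH => xA xR _.
exists (phi hh), c; split.
- by exists hh; [exact: hh_K|].
- have fc : forall v, fix0 (c.1 v).
    move=> v; apply/fix0E; rewrite /c /phi /= aut_vinvK // invgK permM.
    by rewrite hh_target permKV.
  split => //; split; last by exists [::] => v /(_ (fc v)).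
  + exact: aut_comp (aut_vinv A) xA.
  + by rewrite /= xR -{1}hh_root aut_vinvK.
- split => v /=; first by rewrite aut_surj.
  by rewrite mulKVg.
Qed.

End Cocompact.

End Main.

Unset Implicit Arguments.

Theorem proposition3 (d : nat) (F F' : {group {perm 'I_d}}) :
  2 < d ->
  F \subset F' ->
  (forall w : 'I_d, ('C_F[w | 'P] = 1)%g) ->
  (forall s, s \in F' -> forall w : 'I_d, s w \in orbit 'P F w) ->
  exists phi : (vtx d -> vtx d) -> Hel #|F' : F|%g d,
    [/\ (forall g, in_K F F' g -> in_H (phi g)),
        (forall g h, in_K F F' g -> in_K F F' h ->
           Hprod (phi g) (phi h) (phi (fun v => g (h v)))),
        (forall g h, in_K F F' g -> in_K F F' h ->
           Heq (phi g) (phi h) -> g =1 h),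
        H_discrete (fun x => exists2 g, in_K F F' g & Heq x (phi g)) &
        H_cocompact (fun x => exists2 g, in_K F F' g & Heq x (phi g))].
Proof.
move=> d2 sFF sreg orb.
exists (phi F F'); split.
- move=> g; exact: phi_H.
- move=> g h; exact: phi_hom.
- by move=> g h _ _ [_ E].
- exact: phi_discrete.
- exists (@C0 _ d); split; first exact: C0_compact.
  move=> x xH; exact: cocompact_witness.
Qed.
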